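(* Let $\mathbf{X}=(X;f,\preccurlyeq,\tau)$ be a Priestley space $(X;\preccurlyeq,\tau)$ endowed with a map $f\colon X\to X$ that is an order-reversing homeomorphism of order two (i.e. $f(f(x))=x$ for all $x\in X$). Choose a subset $Y\subseteq X$ satisfying: (a) every $x\in X$ with $f(x)=x$ belongs to $Y$; (b) for every $x\in X$ with $x\neq f(x)$, exactly one of $x$, $f(x)$ belongs to $Y$. Then the system $$\sigma=\{Z\subseteq Y\mid Z\cup f(Z)\text{ is open in } (X,\tau)\}$$ is a topology on $Y$, and $(Y,\sigma)$ is a Boolean space (i.e. compact, Hausdorff and having a basis of clopen sets).
   Context: A Priestley space is a compact ordered topological space $(X;\preccurlyeq,\tau)$ such that whenever $x\not\preccurlyeq y$ there is a clopen up-set containing $x$ but not $y$. An order-reversing map $f$ satisfies $x\preccurlyeq y\Rightarrow f(y)\preccurlyeq f(x)$. *)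

(* Defs.v *)
From HB Require Import structures.
From mathcomp Require Import all_boot all_order.
From mathcomp Require Import classical_sets boolp cardinality topology.
Set Implicit Arguments. Unset Strict Implicit. Unset Printing Implicit Defensive.
Local Open Scope classical_set_scope.

Definition partial_order {X : Type} (le : X -> X -> Prop) : Prop :=
  (forall x, le x x) /\
  (forall x y, le x y -> le y x -> x = y) /\
  (forall x y z, le x y -> le y z -> le x z).

Definition up_set {X : Type} (le : X -> X -> Prop) (U : set X) : Prop :=
  forall x y, U x -> le x y -> U y.

Definition priestley_space {X : topologicalType} (le : X -> X -> Prop) : Prop :=
  partial_order le /\ compact [set: X] /\
  (forall x y, ~ le x y ->
     exists U : set X, clopen U /\ up_set le U /\ U x /\ ~ U y).

Definition order_reversing {X : Type} (le : X -> X -> Prop) (f : X -> X) : Prop :=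
  forall x y, le x y -> le (f y) (f x).

Definition homeomorphism {X : topologicalType} (f : X -> X) : Prop :=
  continuous f /\ exists g : X -> X,
    continuous g /\ (forall x, g (f x) = x) /\ (forall x, f (g x) = x).

Definition is_topology_on {T : Type} (Y : set T) (O : set (set T)) : Prop :=
  (forall Z, O Z -> Z `<=` Y) /\ O set0 /\ O Y /\
  (forall G : set (set T), G `<=` O -> O (\bigcup_(A in G) A)) /\
  (forall A B, O A -> O B -> O (A `&` B)).

Definition compact_on {T : Type} (Y : set T) (O : set (set T)) : Prop :=
  forall G : set (set T), G `<=` O -> Y `<=` \bigcup_(A in G) A ->
    exists F : set (set T), [/\ finite_set F, F `<=` G & Y `<=` \bigcup_(A in F) A].

Definition hausdorff_on {T : Type} (Y : set T) (O : set (set T)) : Prop :=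
  forall x y, Y x -> Y y -> x <> y ->
    exists U V, [/\ O U, O V, U x, V y & U `&` V = set0].

Definition clopen_basis_on {T : Type} (Y : set T) (O : set (set T)) : Prop :=
  forall Z, O Z -> forall y, Z y ->
    exists B, [/\ O B, O (Y `\` B), B y & B `<=` Z].

Definition boolean_space_on {T : Type} (Y : set T) (O : set (set T)) : Prop :=
  [/\ compact_on Y O, hausdorff_on Y O & clopen_basis_on Y O].

(* Main.v *)
Require Import Defs.
From HB Require Import structures.
From mathcomp Require Import all_boot all_order.
From mathcomp Require Import classical_sets boolp cardinality topology.
Local Open Scope classical_set_scope.
Definition pX (T : topologicalType) (x : T) : Type := T.
HB.instance Definition _ (T : topologicalType) (x:T) := Topological.copy (@pX T x) T.
HB.instance Definition _ (T : topologicalType) (x:T) := isPointed.Build (@pX T x) x.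
Lemma cmp_cover (T : topologicalType) (x0 : T) : compact [set: T] -> cover_compact [set: T].
Proof. move=> c. have : compact [set: @pX T x0] by exact: c.
rewrite compact_cover. exact. Qed.

Section FinCover.
Import finmap.
Lemma cover_fin (T : topologicalType) (x0 : T) (I : choiceType) (D : set I)
  (F : I -> set T) : compact [set: T] -> (forall i, D i -> open (F i)) ->
  [set: T] `<=` \bigcup_(i in D) F i ->
  exists E : set I, [/\ finite_set E, E `<=` D & [set: T] `<=` \bigcup_(i in E) F i].
Proof.
move=> c oF cv; have [D' sub cov] := @cmp_cover _ x0 c I D F oF cv.
exists [set` D']; split.
- exact: finite_fset.
- by move=> i /= iD; have := sub i iD; rewrite in_setE.
- by move=> x _; have [i iD Fi] := cov x Logic.I; exists i.
Qed.
End FinCover.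

Lemma prie_sep {X : topologicalType} {le : X -> X -> Prop} :
  priestley_space le -> forall a b : X, a <> b -> exists C, clopen C /\ C a /\ ~ C b.
Proof.
move=> [[_ [anti _]] [_ sep]] a b ab.
case: (pselect (le a b)) => lab.
  have nba : ~ le b a by move=> lba; apply: ab; exact: anti.
  have [U [cU [_ [Ub Ua]]]] := sep _ _ nba.
  by exists (~` U); split; [exact: clopenC|split].
have [U [cU [_ [Ua Ub]]]] := sep _ _ lab.
by exists U.
Qed.

Lemma prie_hausdorff {X : topologicalType} {le : X -> X -> Prop} :
  priestley_space le -> hausdorff_space X.
Proof.
move=> P; rewrite open_hausdorff => x y /eqP xy.
have [C [[oC cC] [Cx Cy]]] := prie_sep P _ _ xy.
exists (C, ~` C); first by rewrite !inE.
split => //=; first exact: closed_openC.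
by apply/eqP; rewrite setICr.
Qed.

Lemma prie_zd {X : topologicalType} {le : X -> X -> Prop} :
  priestley_space le -> zero_dimensional X.
Proof.
move=> P x y /eqP xy; have [C [cC [Cx Cy]]] := prie_sep P _ _ xy.
by exists C.
Qed.

Lemma prie_nbhd {X : topologicalType} {le : X -> X -> Prop} :
  priestley_space le -> forall (O : set X) x, open O -> O x ->
  exists C, clopen C /\ C x /\ C `<=` O.
Proof.
move=> P O x oO Ox.
have := @zero_dimensional_cvg _ x (prie_hausdorff P) (prie_zd P) P.2.1.
move=> /(_ O (open_nbhs_nbhs (conj oO Ox))) [D [Dx cD] DO].
by exists D.
Qed.

Theorem mainTheorem1 (X : topologicalType) (le : X -> X -> Prop) (f : X -> X)
  (Y : set X) :
  priestley_space le ->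
  order_reversing le f ->
  homeomorphism f ->
  (forall x, f (f x) = x) ->
  (forall x, f x = x -> Y x) ->
  (forall x, x <> f x -> (Y x <-> ~ Y (f x))) ->
  let sigma := [set Z : set X | Z `<=` Y /\ open (Z `|` f @` Z)] in
  is_topology_on Y sigma /\ boolean_space_on Y sigma.
Proof.
move=> P _ [fc _] ff fixY exY sigma.
have KY : forall x, Y x -> Y (f x) -> f x = x.
  move=> x Yx Yfx; apply: contrapT => nx.
  by have /(_ Yx) := (exY x (nesym nx)).1.
have YorF : forall x, Y x \/ Y (f x).
  move=> x; case: (pselect (Y x)) => Yx; first by left.
  right; case: (pselect (x = f x)) => [e|ne]; first by rewrite -e; exact: fixY.
  by apply: contrapT => nY; apply: Yx; apply: (exY x ne).2.
have symZ : forall Z, Z `<=` Y -> (Z `|` f @` Z) `&` Y = Z.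
  move=> Z ZY; apply/seteqP; split => y /=; last first.
    by move=> Zy; split; [left|exact: ZY].
  case=> [[//|[z Zz <-]] Yfz].
  by rewrite (KY z (ZY _ Zz) Yfz).
have symW : forall W : set X, (forall x, W x -> W (f x)) ->
    (W `&` Y) `|` f @` (W `&` Y) = W.
  move=> W sW; apply/seteqP; split => w /=.
    by case=> [[]//|[z [Wz _] <-]]; exact: sW.
  move=> Ww; case: (YorF w) => Yw; first by left.
  by right; exists (f w); [split => //; exact: sW|exact: ff].
have sigmaW : forall W : set X, open W -> (forall x, W x -> W (f x)) ->
    sigma (W `&` Y).
  by move=> W oW sW; split; [move=> x []|rewrite symW].
have basis : clopen_basis_on Y sigma.
  move=> Z [ZY oZ] y Zy.
  have [C1 [cC1 [C1y C1O]]] := prie_nbhd P _ _ oZ (or_introl Zy).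
  have Ofy : (Z `|` f @` Z) (f y) by right; exists y.
  have [C2 [cC2 [C2y C2O]]] := prie_nbhd P _ _ oZ Ofy.
  pose C := C1 `|` C2.
  have cC : clopen C by exact: clopenU.
  pose W := C `&` f @^-1` C.
  have cW : clopen W by apply: clopenI => //; exact: preimage_clopen.
  have sW : forall x, W x -> W (f x).
    by move=> x [Cx Cfx]; split => //=; rewrite ff.
  have sWc : forall x, (~` W) x -> (~` W) (f x).
    by move=> x nW Wf; apply: nW; have := sW _ Wf; rewrite ff.
  exists (W `&` Y); split.
  - exact: sigmaW cW.1 sW.
  - have -> : Y `\` (W `&` Y) = (~` W) `&` Y.
      by apply/seteqP; split => x /=; [case=> Yx nW; split => // Wx; apply: nW|
        case=> nW Yx; split => // -[]].
    apply: sigmaW sWc; exact: closed_openC cW.2.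
  - by split => //; [split => /=; [left|right]|exact: ZY].
  - move=> x [[Cx Cfx] Yx]; rewrite -(symZ Z ZY); split => //.
    by case: Cx; [exact: C1O|exact: C2O].
have T2 := prie_hausdorff P.
have cl1 := accessible_closed_set1 (hausdorff_accessible T2).
split; first (split; [|split; [|split; [|split]]]).
- by move=> Z [].
- split => //; rewrite image_set0 set0U; exact: open0.
- split => //; rewrite (_ : _ `|` _ = setT); first exact: openT.
  apply/seteqP; split => x // _; case: (YorF x) => Yx; first by left.
  by right; exists (f x) => //; exact: ff.
- move=> G GS; split; first by move=> x [A GA Ax]; exact: (GS A GA).1.
  rewrite (_ : _ `|` _ = \bigcup_(A in G) (A `|` f @` A)).
    by apply: bigcup_open => A GA; exact: (GS A GA).2.
  apply/seteqP; split => x /=.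
    by case=> [[A GA Ax]|[z [A GA Az] <-]]; exists A => //; [left|right; exists z].
  by case=> A GA [Ax|[z Az <-]]; [left; exists A|right; exists z => //; exists A].
- move=> A B [AY oA] [BY oB]; split; first by move=> x [/AY].
  rewrite (_ : _ `|` _ = (A `|` f @` A) `&` (B `|` f @` B)); first exact: openI.
  apply/seteqP; split => x /=.
    by case=> [[Ax Bx]|[z [Az Bz] <-]]; split; [left|left|right; exists z|right; exists z].
  case=> [[Ax|[a Aa ea]] [Bx|[b Bb eb]]].
  + by left.
  + subst x; have e : f b = b := KY b (BY _ Bb) (AY _ Ax).
    by left; rewrite e; split => //; move: Ax; rewrite e.
  + subst x; have e : f a = a := KY a (AY _ Aa) (BY _ Bx).
    by left; rewrite e; split => //; move: Bx; rewrite e.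
  + have e : a = b by rewrite -(ff a) -(ff b) ea eb.
    by right; exists a => //; split => //; rewrite e.
split => //.
- move=> G GS YG.
  case: (pselect (exists x0 : X, True)) => [[x0 _]|nX]; last first.
    exists set0; split; [exact: (@finite_set0 (set X))|by move=> ?|].
    by move=> x _; exfalso; apply: nX; exists x.
  have := @cover_fin _ x0 _ G (fun A : set X => A `|` f @` A) P.2.1.
  case.
  + by move=> A GA; exact: (GS A GA).2.
  + move=> x _; case: (YorF x) => Yx.
      by have [A GA Ax] := YG x Yx; exists A => //; left.
    have [A GA Ax] := YG _ Yx; exists A => //; right; exists (f x) => //; exact: ff.
  move=> E [finE sub cov]; exists E; split => //.
  move=> y Yy; have [A AD [Ay|[a Aa ea]]] := cov y I; first by exists A.
  have GA : G A by exact: sub.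
  have Ya := (GS A GA).1 _ Aa.
  have fy : f y = a by rewrite -ea ff.
  have e := KY y Yy (eq_ind_r Y Ya fy).
  by exists A => //; rewrite -e fy.
- move=> x y Yx Yy xy.
  pose W := ~` ([set y] `|` [set f y]).
  have oW : open W by apply: closed_openC; apply: closedU; apply: cl1.
  have sW : forall z, W z -> W (f z).
    move=> z Wz [/= e|/= e]; apply: Wz; [right; rewrite -e ff //|left].
    by rewrite -(ff z) e ff.
  have Wx : W x.
    move=> [/= e|/= e]; first by apply: xy.
    apply: xy; have e2 : f x = y by rewrite e ff.
    have := KY x Yx; rewrite e2 => /(_ Yy); rewrite -e2 => ->.
    by [].
  have [B [sB sYB Bx BZ]] := basis _ (sigmaW _ oW sW) x (conj Wx Yx).
  exists B, (Y `\` B); split => //.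
  + split => // By; have [Wy _] := BZ _ By; apply: Wy; by left.
  + by apply/seteqP; split => z // [Bz [_ nBz]].
Qed.
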